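(* Let $X$ be a topological space, let $Y$ and $Z$ be locally compact Hausdorff spaces, let $f_1\colon X\to Y$ be continuous and let $f_2\colon Y\to Z$ be proper and continuous. Then $\beta_Y(X,f_1)\cong\beta_Z(X,f_2\circ f_1)$.
   Context: For a locally compact Hausdorff space $B$ and a space $X$ with continuous $r\colon X\to B$, let $H_{(X,r)}\subseteq\mathrm{C_b}(X)$ be the closed linear span of products $g\cdot(h\circ r)$ with $g\in\mathrm{C_b}(X)$, $h\in\mathrm C_0(B)$; the relative Stone--Čech compactification $\beta_B(X,r)$ is the spectrum of the commutative C*-algebra $H_{(X,r)}$, with canonical map $i\colon X\to\beta_B(X,r)$ sending $x$ to evaluation at $x$. *)

(* Defs.v *)
(* Scalars: the complex numbers
   C := R[i] over an arbitrary realType R (i.e. over the real numbers),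
   with the norm topology coming from its numFieldType structure ((_)^o). *)
From HB Require Import structures.
From mathcomp Require Import all_boot all_order all_algebra.
From mathcomp Require Import complex.
From mathcomp Require Import all_classical all_reals all_analysis.
Set Implicit Arguments. Unset Strict Implicit. Unset Printing Implicit Defensive.
Import Order.TTheory GRing.Theory Num.Theory.
Import numFieldNormedType.Exports.
Local Open Scope ring_scope.
Local Open Scope classical_set_scope.

Definition Cx (R : realType) := ((R[i])%C)^o.

Definition Cb (R : realType) (X : topologicalType) (f : X -> Cx R) : Prop :=
  continuous f /\ exists M : Cx R, forall x, `|f x| <= M.

Definition C0 (R : realType) (B : topologicalType) (h : B -> Cx R) : Prop :=
  continuous h /\
  forall eps : Cx R, 0 < eps -> compact [set b | eps <= `|h b|].

Definition rel_span (R : realType) (X B : topologicalType) (r : X -> B)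
  (p : X -> Cx R) : Prop :=
  exists (n : nat) (c : 'I_n -> Cx R) (g : 'I_n -> X -> Cx R)
         (h : 'I_n -> B -> Cx R),
    (forall i, Cb (g i)) /\ (forall i, C0 (h i)) /\
    p = (fun x => \sum_(i < n) c i * (g i x * h i (r x))).

Definition H_alg (R : realType) (X B : topologicalType) (r : X -> B)
  (f : X -> Cx R) : Prop :=
  Cb f /\ forall eps : Cx R, 0 < eps ->
    exists p, rel_span r p /\ forall x, `|f x - p x| <= eps.

(* A character (nonzero multiplicative linear functional) of a
   subalgebra A of the functions X -> C; it is represented by a total
   functional on X -> C that is 0 outside A (canonical extension), so
   that characters correspond bijectively to these functionals. *)
Definition character (R : realType) (X : Type) (A : set (X -> Cx R))
  (phi : (X -> Cx R) -> Cx R) : Prop :=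
  [/\ forall f, ~ A f -> phi f = 0,
      forall f g, A f -> A g -> phi (fun x => f x + g x) = phi f + phi g,
      forall (a : Cx R) f, A f -> phi (fun x => a * f x) = a * phi f,
      forall f g, A f -> A g -> phi (fun x => f x * g x) = phi f * phi g
    & (exists2 f, A f & phi f != 0)].

(* Gelfand spectrum of A with the weak-* topology, realised as a subspace of
   the pointwise-convergence space of functionals (the coordinates outside A
   are constantly 0, so the subspace topology is the weak-* topology). *)
Definition spectrum (R : realType) (X : Type) (A : set (X -> Cx R))
  : set {ptws (X -> Cx R) -> Cx R} :=
  [set phi | character A phi].

Definition rel_beta (R : realType) (X B : topologicalType) (r : X -> B)
  : set {ptws (X -> Cx R) -> Cx R} :=
  spectrum (H_alg r).

Definition homeomorphic (T U : topologicalType) (A : set T) (B : set U) : Prop :=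
  exists (f : T -> U) (g : U -> T),
    [/\ ({within A, continuous f}), ({within B, continuous g}),
        (f @` A `<=` B /\ g @` B `<=` A),
        (forall a, A a -> g (f a) = a) & (forall b, B b -> f (g b) = b)].

Definition proper_map (T U : topologicalType) (f : T -> U) : Prop :=
  forall K : set U, compact K -> compact (f @^-1` K).

(* Main.v *)
Require Import Defs.
From HB Require Import structures.
From mathcomp Require Import all_boot all_order all_algebra.
From mathcomp Require Import complex.
From mathcomp Require Import all_classical all_reals all_analysis.
From mathcomp Require Import ring.
Import Order.TTheory GRing.Theory Num.Theory.
Import numFieldNormedType.Exports.
Local Open Scope classical_set_scope.
Local Open Scope ring_scope.

Lemma normCR (R : realType) (a : R) : `|(a%:C)%C : Cx R| = (`|a|%:C)%C.
Proof. by rewrite normc_def /= expr0n /= addr0 sqrtr_sqr. Qed.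

Lemma Cpos (R : realType) (e : Cx R) : 0 < e -> e = ((complex.Re e)%:C)%C /\ 0 < complex.Re e.
Proof.
case: e => a b; rewrite ltcE /= => /andP[/eqP -> a0]; by split.
Qed.

Lemma CR_continuous (R : realType) : continuous (fun r : R => (r%:C)%C : Cx R).
Proof.
move=> x; apply/(@cvgrPdist_lt _ (Cx R) _ (nbhs x)) => e /Cpos [-> e0].
have H0 : \forall t \near x, `|x - t| < complex.Re e.
  by move: (@cvg_id _ (nbhs x)) => /cvgrPdist_lt; apply.
near=> y; have /= H := near H0 y.
have -> : ((x%:C)%C - (y%:C)%C : Cx R) = ((x - y)%:C)%C.
  by apply/eqP; rewrite eq_complex /= subrr !eqxx.
by rewrite normCR ltcR.
Unshelve. all: by end_near. Qed.
Lemma bump (R : realType) (Z : topologicalType) (C : set Z) :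
  hausdorff_space Z -> locally_compact [set: Z] -> compact C ->
  exists k : Z -> R, [/\ continuous k, (forall z, 0 <= k z <= 1),
    (forall z, C z -> k z = 1) &
    (forall e : R, 0 < e -> compact [set z | e <= k z])].
Proof.
move=> hZ lcZ cC.
pose Zs := one_point_compactification Z.
have hZs : hausdorff_space Zs by exact: one_point_compactification_hausdorff.
have nZs : normal_space Zs.
  by apply: compact_normal => //; exact: one_point_compactification_compact.
have cA : compact (Some @` C : set Zs).
  apply: continuous_compact => //; apply: continuous_subspaceT.
  exact: one_point_compactification_some_continuous.
have clA : closed (Some @` C : set Zs) by exact: compact_closed.
have clN : closed ([set None] : set Zs).
  exact/accessible_closed_set1/hausdorff_accessible.
have dis : [set None] `&` (Some @` C : set Zs) = set0.
  by apply/seteqP; split => // x [-> [? _]].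
have := (proj1 (@normal_separatorP R Zs) nZs) _ _ clN clA dis.
move=> /(@uniform_separatorP _ R) [f [cf f01 f0 f1]].
have fN : f None = 0 by apply: f0; exists None.
have fr z : 0 <= f z <= 1.
  have := f01 (f z) (ex_intro2 _ _ z I erefl); by rewrite /= in_itv.
have kc : continuous (f \o Some).
  move=> z; apply: continuous_comp; last exact: cf.
  exact: one_point_compactification_some_continuous.
exists (f \o Some); split => //.
- by move=> z; exact: fr.
- by move=> z Cz; apply: f1; exists (Some z : Zs) => //; exists z.
move=> e e0.
have : (f @ (nbhs (None : Zs))) [set x | x < e].
  apply: (cf None); apply: open_nbhs_nbhs; split; first exact: open_lt.
  by rewrite /= fN.
move=> /= [K [cK clK] KW].
apply: (subclosed_compact _ cK).
  have := (proj1 (continuous_closedP _) kc _ (@closed_ge R e)); exact.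
move=> z /= ez; apply: contrapT => Kz.
have : f (Some z) < e by apply: KW; left; exists z.
by rewrite ltNge ez.
Qed.

Lemma C0_real (R : realType) (Z : topologicalType) (k : Z -> R) :
  continuous k -> (forall z, 0 <= k z) ->
  (forall e : R, 0 < e -> compact [set z | e <= k z]) ->
  C0 (fun z => (k z)%:C%C : Cx R).
Proof.
move=> kc k0 kK; split.
  by move=> z; apply: continuous_comp; [exact: kc | exact: CR_continuous].
move=> e /Cpos [-> e0].
suff -> : [set b | ((complex.Re e)%:C)%C <= `|((k b)%:C)%C : Cx R|] =
          [set z | complex.Re e <= k z] by exact: kK.
by apply/seteqP; split => z /=; rewrite normCR ger0_norm // lecR.
Qed.

Lemma approx (R : realType) (Y Z : topologicalType) (f2 : Y -> Z) :
  hausdorff_space Z -> locally_compact [set: Z] -> continuous f2 ->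
  forall h : Y -> Cx R, C0 h -> forall d : Cx R, 0 < d ->
  exists k : Z -> Cx R, C0 k /\ forall y, `|h y - h y * k (f2 y)| <= d.
Proof.
move=> hZ lcZ cf2 h [hc hK] d d0.
have cK : compact (f2 @` [set y | d <= `|h y|]).
  by apply: continuous_compact; [exact: continuous_subspaceT | exact: hK].
have [kr [krc kr01 kr1 krK]] := @bump R Z _ hZ lcZ cK.
exists (fun z => (kr z)%:C%C); split.
  apply: C0_real => // z; by case/andP: (kr01 z).
move=> y; have [hy|hy] := pselect (d <= `|h y|).
  rewrite kr1; last by exists y.
  by rewrite mulr1 subrr normr0 ltW.
have {}hy : `|h y| < d.
  by rewrite (real_ltNge (normr_real _) (gtr0_real d0)); apply/negP.
have -> : h y - h y * ((kr (f2 y))%:C)%C = h y * ((1 - kr (f2 y))%:C)%C.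
  have -> : ((1 - kr (f2 y))%:C)%C = (1 : Cx R) - (kr (f2 y))%:C%C.
    by apply/eqP; rewrite eq_complex /= oppr0 addr0 !eqxx.
  by rewrite mulrBr mulr1.
rewrite normrM normCR; apply: le_trans (ltW hy).
rewrite ler_piMr //; rewrite -[1 : Cx R]/((1 : R)%:C)%C lecR.
case/andP: (kr01 (f2 y)) => a b.
by rewrite ger0_norm ?subr_ge0 // lerBlDr lerDl.
Qed.

Lemma ReB (R : realType) (a b : Cx R) :
  complex.Re (a - b) = complex.Re a - complex.Re b.
Proof. by case: a => ? ?; case: b. Qed.

Lemma Re_continuous (R : realType) : continuous (fun z : Cx R => complex.Re z).
Proof.
move=> z; apply/(@cvgrPdist_lt _ R^o _ (nbhs (z : Cx R)) (nbhs_filter (z : Cx R))) => e e0.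
have H0 : \forall t \near z, `|z - t| < (e%:C)%C.
  by apply: (proj1 (@cvgrPdist_lt _ (Cx R) _ (nbhs z) _ id z) cvg_id); rewrite ltcR.
near=> t; have H : `|z - t| < (e%:C)%C by near: t.
have := le_lt_trans (normc_ge_Re (z - t)) H; rewrite ltcR.
by rewrite -ReB.
Unshelve. all: by end_near. Qed.

Lemma C0_bounded (R : realType) (Y : topologicalType) (h : Y -> Cx R) :
  C0 h -> exists M : Cx R, forall y, `|h y| <= M.
Proof.
move=> [hc hK].
pose phi := fun y => complex.Re `|h y|.
have phic : continuous phi.
  move=> y; apply: continuous_comp; last exact: Re_continuous.
  by apply: continuous_comp; [exact: hc | exact: norm_continuous].
have cK : compact (phi @` [set y | 1 <= `|h y|]).
  by apply: continuous_compact; [exact: continuous_subspaceT | exact: hK].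
have [M _ HM] := pinfty_ex_gt0 (compact_bounded cK).
exists ((`|M|)%:C%C + 1) => y.
have [hy|hy] := pselect (1 <= `|h y|).
  have := HM (phi y) (ex_intro2 _ _ y hy erefl).
  rewrite /phi /= => H.
  have E : `|h y| = ((complex.Re `|h y|)%:C)%C.
    by rewrite RRe_real // normr_real.
  rewrite E; apply: (@le_trans _ _ ((`|M|)%:C)%C); last by rewrite lerDl ler01.
  rewrite lecR; apply: le_trans (ler_norm _) (le_trans H (ler_norm _)).
have hy' : `|h y| < 1.
  by rewrite (real_ltNge (normr_real _) (@gtr0_real _ 1 ltr01)); apply/negP.
apply: le_trans (ltW hy') _; rewrite lerDr.
by rewrite -[0 : Cx R]/((0 : R)%:C)%C lecR.
Qed.

Lemma C0_comp (R : realType) (Y Z : topologicalType) (f2 : Y -> Z)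
  (h : Z -> Cx R) :
  continuous f2 -> proper_map f2 -> C0 h -> C0 (h \o f2).
Proof.
move=> cf2 pf2 [hc hK]; split.
  by move=> y; apply: continuous_comp; [exact: cf2 | exact: hc].
by move=> e e0; exact: (pf2 _ (hK e e0)).
Qed.

Lemma H_sub1 (R : realType) (X Y Z : topologicalType) (f1 : X -> Y)
  (f2 : Y -> Z) (f : X -> Cx R) :
  continuous f2 -> proper_map f2 -> H_alg (f2 \o f1) f -> H_alg f1 f.
Proof.
move=> cf2 pf2 [Cf Hf]; split => // eps e0.
have [p [[n [c [g [h [Cg [Ch pE]]]]]] Hp]] := Hf eps e0.
exists p; split => //.
exists n, c, g, (fun i => h i \o f2); split => //; split => //.
by move=> i; apply: C0_comp.
Qed.

Lemma H_sub2 (R : realType) (X Y Z : topologicalType) (f1 : X -> Y)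
  (f2 : Y -> Z) (f : X -> Cx R) :
  hausdorff_space Z -> locally_compact [set: Z] ->
  continuous f1 -> continuous f2 -> H_alg f1 f -> H_alg (f2 \o f1) f.
Proof.
move=> hZ lcZ cf1 cf2 [Cf Hf]; split => // eps e0.
pose e := eps / 2%:R.
have e0' : 0 < e by rewrite divr_gt0 // ltr0n.
have [p [[n [c [g [h [Cg [Ch pE]]]]]] Hp]] := Hf e e0'.
have [M HM] : {M : 'I_n -> Cx R & forall i x, `|g i x| <= M i}.
  by apply: (@choice _ (Cx R) (fun i M => forall x, `|g i x| <= M)) => i; case: (Cg i).
pose N : Cx R := n.+1%:R.
have N0 : 0 < N by rewrite ltr0n.
pose a i := `|c i| * `|M i|.
have a0 i : 0 <= a i by rewrite mulr_ge0.
pose d i := e / (N * (a i + 1)).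
have d0 i : 0 < d i.
  by rewrite divr_gt0 // mulr_gt0 // ltr_wpDl.
have [k Hk] : {k : 'I_n -> Z -> Cx R &
    forall i, C0 (k i) /\ forall y, `|h i y - h i y * k i (f2 y)| <= d i}.
  apply: (@choice _ (Z -> Cx R) (fun i k => C0 k /\ forall y, `|h i y - h i y * k (f2 y)| <= d i)).
  by move=> i; exact: approx.
exists (fun x => \sum_(i < n) c i * ((g i x * h i (f1 x)) * k i ((f2 \o f1) x))).
split.
  exists n, c, (fun i x => g i x * h i (f1 x)), k; split; last first.
    by split => // i; case: (Hk i).
  move=> i; split.
    move=> x; apply: continuousM; first exact: (proj1 (Cg i)).
    by apply: continuous_comp; [exact: cf1 | exact: (proj1 (Ch i))].
  have [Mh HMh] := @C0_bounded _ _ _ (Ch i).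
  exists (M i * Mh) => x; rewrite normrM.
  by apply: ler_pM.
move=> x.
have -> : f x - \sum_(i < n) c i * (g i x * h i (f1 x) * k i ((f2 \o f1) x)) =
  (f x - p x) + \sum_(i < n) c i * (g i x * (h i (f1 x) - h i (f1 x) * k i (f2 (f1 x)))).
  have -> : \sum_(i < n) c i * (g i x * (h i (f1 x) - h i (f1 x) * k i (f2 (f1 x)))) = \sum_(i < n) c i * (g i x * h i (f1 x)) - \sum_(i < n) c i * (g i x * h i (f1 x) * k i ((f2 \o f1) x)).
    by rewrite -sumrB; apply: eq_bigr => i _ /=; rewrite !mulrBr !mulrA.
  by rewrite pE /= addrA subrK.
rewrite [eps]splitr; apply: le_trans (ler_normD _ _) _; apply: lerD; first exact: Hp.
apply: le_trans (ler_norm_sum _ _ _) _.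
apply: (@le_trans _ _ (\sum_(i < n) e / N)).
  apply: ler_sum => i _.
  rewrite !normrM mulrA.
  have Mi0 : 0 <= M i := le_trans (normr_ge0 _) (HM i x).
  apply: (@le_trans _ _ (a i * d i)).
    apply: ler_pM; rewrite ?mulr_ge0 //.
      by apply: ler_pM => //; rewrite (ger0_norm Mi0); exact: HM.
    exact: (proj2 (Hk i)).
  apply: (@le_trans _ _ ((a i + 1) * d i)).
    by apply: ler_wpM2r; [exact: ltW | rewrite lerDl].
  rewrite /d; have -> : (a i + 1) * (e / (N * (a i + 1))) = e / N.
    by field; apply/andP; split; apply: lt0r_neq0 => //; rewrite ltr_wpDl.
  by [].
rewrite sumr_const card_ord.
apply: (@le_trans _ _ ((e / N) *+ n.+1)).
  by rewrite mulrSr lerDl divr_ge0 // ltW.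
by rewrite -mulr_natr divfK // lt0r_neq0.
Qed.

Theorem lemma4p12 (R : realType) (X Y Z : topologicalType)
  (f1 : X -> Y) (f2 : Y -> Z) :
  hausdorff_space Y -> locally_compact [set: Y] ->
  hausdorff_space Z -> locally_compact [set: Z] ->
  continuous f1 -> continuous f2 -> proper_map f2 ->
  homeomorphic (@rel_beta R X Y f1) (@rel_beta R X Z (f2 \o f1)).
Proof.
move=> hY lcY hZ lcZ cf1 cf2 pf2.
have E : @H_alg R X Y f1 = @H_alg R X Z (f2 \o f1).
  apply/funext => f; apply/propext; split.
    exact: H_sub2.
  exact: H_sub1.
rewrite /rel_beta E.
exists id, id; split => //.
- by apply: continuous_subspaceT => x; exact: cvg_id.
- by apply: continuous_subspaceT => x; exact: cvg_id.
- by split => _ [b Bb <-].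
Qed.
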